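(* Suppose $f:\overline{\mathcal{G}}\to\mathbb{R}$ is harmonic and $c$ is a regular value of $f$. Assume there is no $x\in\partial\overline{\mathcal{G}}$ with $f(x)=c$. Then $f^{-1}(c)$ is a finite set.
   Context: $\mathcal{G}$ is a connected, locally finite metric graph with countable vertex set and countable edge set. Each edge has a positive length and is identified with an interval. $\mathcal{G}$ carries the geodesic distance, and $\overline{\mathcal{G}}$ is its metric completion. A designated set of vertices, containing all vertices of degree $1$, forms the boundary vertices. $\mathcal{G}_{int}$ is $\mathcal{G}$ minus the boundary vertices, and $\partial\overline{\mathcal{G}}=\overline{\mathcal{G}}\setminus\mathcal{G}_{int}$. Standing assumptions: $\overline{\mathcal{G}}$ is compact and $\partial\overline{\mathcal{G}}$ is totally disconnected. A function $f:\overline{\mathcal{G}}\to\mathbb{R}$ is harmonic if it is continuous, linear on each edge, and satisfies $\sum_{e\sim v}\partial_\nu f_e(v)=0$ at every interior vertex $v$, where $\partial_\nu f_e(v)$ is the derivative of $f_e$ at $v$ in the direction from $v$ into the edge $e$. A point $x\in\mathcal{G}$ is a critical point of $f$ if $x$ is a vertex or $f'(x)=0$. A number is a critical value if its preimage contains a critical point. Values in the range of $f$ that are not critical values are regular values. *)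

(* Defs.v *)
From HB Require Import structures.
From mathcomp Require Import all_boot all_order all_algebra.
From mathcomp Require Import all_classical all_reals all_analysis.
Set Implicit Arguments. Unset Strict Implicit. Unset Printing Implicit Defensive.
Import Order.TTheory GRing.Theory Num.Theory.
Import numFieldNormedType.Exports.
Local Open Scope classical_set_scope.
Local Open Scope ring_scope.

(* Combinatorial data of a metric graph: countable vertex and edge sets,
   each edge e is identified with the interval [0, len e], its endpoint 0
   being the vertex [src e] and its endpoint [len e] being [tgt e]. *)
Record mgraph (R : realType) := MGraph {
  vert : countType;
  edge : countType;
  src : edge -> vert;
  tgt : edge -> vert;
  len : edge -> R }.

Section MetricGraph.
Variable R : realType.
Variable G : mgraph R.
Local Notation V := (vert G).
Local Notation E := (edge G).

Definition incident (v : V) : set E := [set e | src e = v \/ tgt e = v].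

Definition mg_degree (v : V) : nat :=
  (\sum_(e \in incident v) ((src e == v) + (tgt e == v))%N)%R.

Definition pos_lengths : Prop := forall e : E, 0 < len e.
Definition locally_finite : Prop := forall v, finite_set (incident v).

(* Walks: a vertex a and a sequence of (edge, direction) pairs; direction
   true = traverse from src to tgt. [walk_end a w] is the final vertex, or
   None if w is not a walk starting at a. *)
Fixpoint walk_end (a : V) (w : seq (E * bool)) : option V :=
  match w with
  | [::] => Some a
  | (e, b) :: w' =>
      if (if b then src e else tgt e) == a
      then walk_end (if b then tgt e else src e) w'
      else None
  end.

Definition walk_len (w : seq (E * bool)) : R := \sum_(p <- w) len (p.1 : E).

Definition connected_graph : Prop :=
  forall a b : V, exists w, walk_end a w = Some b.

(* Points of the metric graph G: vertices, and interior points of edges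
   (GEdge e t is the point at coordinate t of edge e, 0 < t < len e). *)
Inductive gpt := GVert of V | GEdge of E & R.

Definition is_pt (p : gpt) : Prop :=
  if p is GEdge e t then 0 < t < len e else True.

Definition vdist (a b : V) : R :=
  inf [set l | exists w, walk_end a w = Some b /\ l = walk_len w].

(* (a, o) is an exit vertex of the point p at distance o along its edge. *)
Definition anchor (p : gpt) (a : V) (o : R) : Prop :=
  match p with
  | GVert v => a = v /\ o = 0
  | GEdge e t => (a = src e /\ o = t) \/ (a = tgt e /\ o = len e - t)
  end.

Definition gdist (p q : gpt) : R :=
  inf [set l | (exists e t s, p = GEdge e t /\ q = GEdge e s /\ l = `|t - s|)
            \/ (exists a oa b ob, anchor p a oa /\ anchor q b ob /\
                                  l = oa + vdist a b + ob)].

Definition bnd_pt (B : set V) (p : gpt) : Prop :=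
  exists v, p = GVert v /\ B v.

Section Completion.
Variable X : pseudoMetricType R.
Variable emb : gpt -> X.

Definition is_metric_completion : Prop :=
  [/\ hausdorff_space X,
      (forall F : set_system X, ProperFilter F -> cauchy F -> exists x : X, F --> x),
      dense (emb @` is_pt) &
      forall p q (r : R), is_pt p -> is_pt q -> 0 < r ->
        (gdist p q < r -> ball (emb p) r (emb q)) /\
        (ball (emb p) r (emb q) -> gdist p q <= r)].

Definition bndG (B : set V) : set X :=
  ~` [set emb p | p in [set p | is_pt p /\ ~ bnd_pt B p]].

Definition fv (f : X -> R) (v : V) : R := f (emb (GVert v)).
Definition slope (f : X -> R) (e : E) : R :=
  (fv f (tgt e) - fv f (src e)) / len e.

(* The outward normal derivative
   into e at v of the linear function f_e is slope f e if v is the src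
   endpoint of e, and - slope f e if v is the tgt endpoint (both for a loop). *)
Definition mg_harmonic (B : set V) (f : X -> R) : Prop :=
  [/\ continuous f,
      (forall (e : E) t, 0 < t < len e ->
         f (emb (GEdge e t)) = fv f (src e) + t / len e *
                                (fv f (tgt e) - fv f (src e))) &
      forall v, ~ B v ->
        \sum_(e \in incident v)
           ((if src e == v then slope f e else 0) +
            (if tgt e == v then - slope f e else 0)) = 0].

Definition mg_critical_point (f : X -> R) (p : gpt) : Prop :=
  is_pt p /\
  match p with
  | GVert _ => True
  | GEdge e t => derive1 (fun s => f (emb (GEdge e s))) t = 0
  end.

Definition mg_critical_value (f : X -> R) (c : R) : Prop :=
  exists p, mg_critical_point f p /\ f (emb p) = c.

Definition mg_regular_value (f : X -> R) (c : R) : Prop :=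
  (exists y : X, f y = c) /\ ~ mg_critical_value f c.

End Completion.
End MetricGraph.

(* Main.v *)
Require Import Defs.
From HB Require Import structures.
From mathcomp Require Import all_boot all_order all_algebra.
From mathcomp Require Import all_classical all_reals all_analysis.
From mathcomp Require Import finmap.
Import Order.TTheory GRing.Theory Num.Theory.
Import numFieldNormedType.Exports.
Local Open Scope classical_set_scope.
Local Open Scope ring_scope.

Definition ptd (T : topologicalType) (x : T) : Type := T.
Arguments ptd {T} x.
HB.instance Definition _ (T : topologicalType) (x : T) :=
  Topological.on (ptd x).
HB.instance Definition _ (T : topologicalType) (x : T) :=
  isPointed.Build (ptd x) x.

Lemma compact_cover_np (T : topologicalType) (A : set T) :
  compact A -> cover_compact A.
Proof.
move=> cA I D F oF AF.
case: (pselect (exists x, A x)) => [[x0 Ax0]|A0].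
- have cA' : @compact (ptd x0) A by exact: cA.
  move: cA'; rewrite compact_cover => cA'.
  exact: (cA' I D F oF AF).
- exists finmap.fset0 => // x Ax; exfalso; apply: A0; by exists x.
Qed.

Theorem lemma3p8 (R : realType) (G : mgraph R) (B : set (vert G))
  (X : pseudoMetricType R) (emb : gpt G -> X) (f : X -> R) (c : R) :
  connected_graph G -> locally_finite G -> pos_lengths G ->
  (forall v, mg_degree v = 1%N -> B v) ->
  is_metric_completion emb ->
  compact [set: X] ->
  totally_disconnected (bndG emb B) ->
  mg_harmonic emb B f ->
  mg_regular_value emb f c ->
  ~ (exists x, bndG emb B x /\ f x = c) ->
  finite_set (f @^-1` [set c]).
Proof.
move=> _ _ lpos _ [_ _ _ Hball] Xcpt _ [fcont flin _] [_ nocrit] nobnd.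
have vdist0 : forall u w, 0 <= @vdist R G u w.
  have infge0 : forall S : set R, (forall l, S l -> 0 <= l) -> 0 <= inf S.
    move=> S HS; have [->|/set0P [l Sl]] := eqVneq S set0; first by rewrite inf0.
    by apply: lb_le_inf => //; exists l.
  move=> u w; rewrite /vdist; apply: infge0.
  move=> _ [w' [_ ->]]; rewrite /walk_len; apply: sumr_ge0 => i _.
  exact/ltW/lpos.
have interior : forall y, f y = c -> exists p, [/\ is_pt p & y = emb p].
  move=> y fyc; have : ~ bndG emb B y by move=> hb; apply: nobnd; exists y.
  rewrite /bndG => /contrapT [p [pp _] <-]; by exists p.
have key : forall x, exists U : set X,
    [/\ open U, U x & forall y, U y -> f y = c -> y = x].
  move=> x; case: (pselect (f x = c)) => fxc; last first.
    exists (f @^-1` ~` [set c]); split => //.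
      apply: open_comp; first by move=> z _; exact: fcont.
      by rewrite openC; exact: closed_eq.
  have [p [pp xe]] := interior x fxc.
  case: p pp xe => [v|e t] pp xe.
    by exfalso; apply: nocrit; exists (GVert v); split => //; rewrite -xe.
  move: (pp) => /= /andP[t0 tl].
  set a := fv emb f (src e); set b := fv emb f (tgt e).
  have fe : forall s, 0 < s < len e -> f (emb (GEdge e s)) = a + s / len e * (b - a).
    by move=> s hs; rewrite flin.
  have ab : a != b.
    apply/eqP => ab; apply: nocrit; exists (GEdge e t); split; last by rewrite -xe.
    split => //=.
    rewrite derive1E (@near_eq_derive _ _ _ _ (cst a)) ?derive_cst //.
    near=> s.
    rewrite fe ?ab ?subrr ?mulr0 ?addr0 //.
    have : s \in `]0, len e[ by near: s; apply: near_in_itvoo; rewrite in_itv /= t0 tl.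
    by rewrite in_itv.
  set m := Num.min t (len e - t).
  have m0 : 0 < m by rewrite lt_min t0 subr_gt0 tl.
  have m20 : 0 < m / 2 by rewrite divr_gt0.
  exists (ball x (m / 2))°; split; [exact: open_interior | exact: nbhsx_ballx |].
  move=> y /interior_subset xy fyc.
  have [q [qp ye]] := interior y fyc.
  have gd : gdist (GEdge e t) q <= m / 2.
    by apply: ((Hball _ q (m/2) pp qp m20).2); rewrite -xe -ye.
  have gdm : gdist (GEdge e t) q < m.
    by apply: (le_lt_trans gd); rewrite ltr_pdivrMr // ltr_pMr // ltr1n.
  move: gdm; rewrite /gdist => /inf_lt [].
    case: q qp {ye gd} => [v|e' s] qp.
    - exists (t + @vdist R G (src e) v + 0) => /=; right.
      by exists (src e), t, v, 0; split; [left | split].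
    - exists (t + @vdist R G (src e) (src e') + s) => /=; right.
      by exists (src e), t, (src e'), s; split; [left | split; [left|]].
  move=> l [[e' [t' [s [pe [qe ->]]]]] | [a' [oa [b' [ob [Aa [Ab ->]]]]]]] lm.
  - case: pe => ee tt; subst e' t' q.
    move: qp => /= /andP[s0 sl].
    have : f (emb (GEdge e s)) = f (emb (GEdge e t)) by rewrite -ye -xe fyc fxc.
    rewrite !fe ?s0 ?sl ?t0 ?tl // => /addrI /mulIf.
    have ba : b - a != 0 by rewrite subr_eq0 eq_sym.
    move=> /(_ ba) /mulIf.
    have l0 : len e != 0 by rewrite gt_eqF // lpos.
    have il0 : (len e)^-1 != 0 by rewrite invr_eq0.
    by move=> /(_ il0) st; rewrite ye xe st.
  - exfalso.
    have moa : m <= oa.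
      case: Aa => [[_ ->]|[_ ->]]; by rewrite ge_min lexx ?orbT.
    have ob0 : 0 <= ob.
      move: Ab qp; case: q {ye gd} => [v|e' s] /=; first by case=> _ ->.
      move=> [[_ ->]|[_ ->]] /andP[s0 sl]; first exact: ltW.
      by rewrite subr_ge0 ltW.
    have := vdist0 a' b'.
    move: lm moa ob0; set vd := vdist _ _; move=> lm moa ob0 vd0.
    have : m < m.
      apply: le_lt_trans lm; apply: le_trans moa _.
      by rewrite -addrA lerDl addr_ge0.
    by rewrite ltxx.
have [U HU] := choice key.
have Xc : cover_compact [set: X] by exact: compact_cover_np.
have HUo : forall i, setT i -> open (U i) by move=> i _; have [] := HU i.
have Hcov : [set: X] `<=` cover setT U by move=> x _; exists x => //; have [] := HU x.
have [D' _ cov] := Xc X setT U HUo Hcov.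
have sub : f @^-1` [set c] `<=` [set` D'].
  move=> y fyc; have [i Di Uiy] := cov y I.
  by have [_ _ /(_ y Uiy fyc) ->] := HU i.
exact: (sub_finite_set sub (finite_fset D')).
Unshelve. all: by end_near.
Qed.
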